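(* Let $\mathbb G$ be any 2-group and $n\geq1$. Then the wreath 2-product $\mathsf S_n\wr\wr\ \mathbb G$ is split if and only if $\mathbb G$ is split.
   Context: A 2-group is a monoidal groupoid $(\mathcal G,\otimes,e,a,l,r)$ in which every object has a weak tensor inverse. $\mathsf S_n\wr\wr\ \mathbb G$ is the 2-group with objects $(\sigma,\mathbf x)$, $\sigma\in\mathsf S_n$, $\mathbf x=(x_1,\dots,x_n)$ objects of $\mathcal G$; morphisms $(\sigma,\mathbf x)\to(\sigma,\mathbf x')$ are $n$-tuples of morphisms $x_i\to x'_i$ (none between different permutations), composed componentwise; tensor $(\sigma,\mathbf{x})\otimes(\sigma',\mathbf{x}')=(\sigma\sigma',(\mathbf{x}\rhd\sigma')\otimes\mathbf{x}')$ and analogously on morphisms, with $\mathbf{x}\rhd\sigma=(x_{\sigma(1)},\dots,x_{\sigma(n)})$ and componentwise $\otimes$; unit $(id,(e,\dots,e))$; associator $(id,a_{\mathbf x\rhd(\sigma'\sigma''),\mathbf x'\rhd\sigma'',\mathbf x''})$ and unitors $(id_\sigma,l_{\mathbf x})$, $(id_\sigma,r_{\mathbf x})$, computed componentwise. A 2-group is split if it is equivalent (monoidal functor with pseudo-inverse up to monoidal natural isomorphism) to an elementary 2-group $\mathsf A[1]\rtimes\mathsf G[0]$ for some group $\mathsf G$ and left $\mathsf G$-module $\mathsf A$: the strict 2-group with objects the elements of $\mathsf G$, morphisms $(a,g):g\to g$, composition $(a',g)\circ(a,g)=(a'+a,g)$, tensor $g\otimes g'=gg'$, $(a,g)\otimes(a',g')=(a+g\lhd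 a',gg')$. *)

(* Defs.v *)
From mathcomp Require Import all_boot all_fingroup.
Set Implicit Arguments. Unset Strict Implicit. Unset Printing Implicit Defensive.

Record tg := TG {
  ob : Type;
  hom : ob -> ob -> Type;
  idm : forall x, hom x x;
  comp : forall x y z, hom y z -> hom x y -> hom x z;
  tens : ob -> ob -> ob;
  tensm : forall x x' y y', hom x x' -> hom y y' -> hom (tens x y) (tens x' y');
  unit : ob;
  assoc : forall x y z, hom (tens (tens x y) z) (tens x (tens y z));
  lunit : forall x, hom (tens unit x) x;
  runit : forall x, hom (tens x unit) x }.

Arguments hom {t}.
Arguments idm {t}.
Arguments comp {t x y z}.
Arguments tens {t}.
Arguments tensm {t x x' y y'}.
Arguments unit {t}.
Arguments assoc {t}.
Arguments lunit {t}.
Arguments runit {t}.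

Record is_twogroup (G : tg) : Prop := {
  comp_assoc : forall (x y z w : ob G) (f : hom x y) (g : hom y z) (h : hom z w),
      comp h (comp g f) = comp (comp h g) f;
  comp_idl : forall (x y : ob G) (f : hom x y), comp (idm y) f = f;
  comp_idr : forall (x y : ob G) (f : hom x y), comp f (idm x) = f;
  groupoid : forall (x y : ob G) (f : hom x y),
      exists g : hom y x, comp g f = idm x /\ comp f g = idm y;
  tensm_id : forall x y : ob G, tensm (idm x) (idm y) = idm (tens x y);
  tensm_comp : forall (x x' x'' y y' y'' : ob G) (f : hom x x') (f' : hom x' x'')
      (g : hom y y') (g' : hom y' y''),
      tensm (comp f' f) (comp g' g) = comp (tensm f' g') (tensm f g);
  assoc_nat : forall (x x' y y' z z' : ob G) (f : hom x x') (g : hom y y') (h : hom z z'),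
      comp (assoc x' y' z') (tensm (tensm f g) h)
      = comp (tensm f (tensm g h)) (assoc x y z);
  lunit_nat : forall (x x' : ob G) (f : hom x x'),
      comp (lunit x') (tensm (idm unit) f) = comp f (lunit x);
  runit_nat : forall (x x' : ob G) (f : hom x x'),
      comp (runit x') (tensm f (idm unit)) = comp f (runit x);
  pentagon : forall x y z w : ob G,
      comp (assoc x y (tens z w)) (assoc (tens x y) z w)
      = comp (tensm (idm x) (assoc y z w))
             (comp (assoc x (tens y z) w) (tensm (assoc x y z) (idm w)));
  triangle : forall x y : ob G,
      comp (tensm (idm x) (lunit y)) (assoc x unit y) = tensm (runit x) (idm y);
  weak_inverse : forall x : ob G, exists y : ob G,
      inhabited (hom (tens x y) unit) /\ inhabited (hom (tens y x) unit) }.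

Definition hom_of_eq (G : tg) (a b : ob G) (p : a = b) : hom a b :=
  match p in _ = b' return hom a b' with erefl => idm a end.

Record mfun (G H : tg) := MFun {
  fob : ob G -> ob H;
  fhom : forall x y : ob G, hom x y -> hom (fob x) (fob y);
  fphi : forall x y : ob G, hom (tens (fob x) (fob y)) (fob (tens x y));
  fphi0 : hom (@unit H) (fob unit) }.
Arguments fob {G H}.
Arguments fhom {G H} _ {x y}.
Arguments fphi {G H}.
Arguments fphi0 {G H}.

Record is_mfun (G H : tg) (F : mfun G H) : Prop := {
  fhom_id : forall x : ob G, fhom F (idm x) = idm (fob F x);
  fhom_comp : forall (x y z : ob G) (f : hom x y) (g : hom y z),
      fhom F (comp g f) = comp (fhom F g) (fhom F f);
  fphi_nat : forall (x x' y y' : ob G) (f : hom x x') (g : hom y y'),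
      comp (fphi F x' y') (tensm (fhom F f) (fhom F g))
      = comp (fhom F (tensm f g)) (fphi F x y);
  fhexagon : forall x y z : ob G,
      comp (fhom F (assoc x y z))
           (comp (fphi F (tens x y) z) (tensm (fphi F x y) (idm (fob F z))))
      = comp (fphi F x (tens y z))
             (comp (tensm (idm (fob F x)) (fphi F y z))
                   (assoc (fob F x) (fob F y) (fob F z)));
  funit_l : forall x : ob G,
      comp (fhom F (lunit x)) (comp (fphi F unit x) (tensm (fphi0 F) (idm (fob F x))))
      = lunit (fob F x);
  funit_r : forall x : ob G,
      comp (fhom F (runit x)) (comp (fphi F x unit) (tensm (idm (fob F x)) (fphi0 F)))
      = runit (fob F x) }.

Definition idF (G : tg) : mfun G G :=
  @MFun G G (fun x => x) (fun x y f => f) (fun x y => idm (tens x y)) (idm unit).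

Definition compF (G H L : tg) (K : mfun H L) (F : mfun G H) : mfun G L :=
  @MFun G L (fun x => fob K (fob F x))
    (fun x y f => fhom K (fhom F f))
    (fun x y => comp (fhom K (fphi F x y)) (fphi K (fob F x) (fob F y)))
    (comp (fhom K (fphi0 F)) (fphi0 K)).

(* monoidal natural transformation F => F'; in a groupoid its components
   are automatically isomorphisms, so this is a monoidal natural iso. *)
Record is_mnat (G H : tg) (F F' : mfun G H) (eta : forall x, hom (fob F x) (fob F' x))
  : Prop := {
  mnat_nat : forall (x y : ob G) (f : hom x y),
      comp (eta y) (fhom F f) = comp (fhom F' f) (eta x);
  mnat_tens : forall x y : ob G,
      comp (eta (tens x y)) (fphi F x y) = comp (fphi F' x y) (tensm (eta x) (eta y));
  mnat_unit : comp (eta unit) (fphi0 F) = fphi0 F' }.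

Arguments is_mnat {G H} F F' eta.

Definition equivalent (G H : tg) : Prop :=
  exists (F : mfun G H) (K : mfun H G),
    [/\ is_mfun F, is_mfun K,
        (exists eta, is_mnat (compF K F) (idF G) eta) &
        (exists eps, is_mnat (compF F K) (idF H) eps)].

Record group := Group {
  gcar : Type;
  gmul : gcar -> gcar -> gcar;
  gone : gcar;
  ginv : gcar -> gcar;
  gmulA : forall a b c, gmul a (gmul b c) = gmul (gmul a b) c;
  gmul1l : forall a, gmul gone a = a;
  gmul1r : forall a, gmul a gone = a;
  gmulVl : forall a, gmul (ginv a) a = gone;
  gmulVr : forall a, gmul a (ginv a) = gone }.

Record gmodule (Gr : group) := GModule {
  mcar : Type;
  madd : mcar -> mcar -> mcar;
  mzero : mcar;
  mneg : mcar -> mcar;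
  mact : gcar Gr -> mcar -> mcar;
  maddA : forall a b c, madd a (madd b c) = madd (madd a b) c;
  maddC : forall a b, madd a b = madd b a;
  madd0 : forall a, madd mzero a = a;
  maddN : forall a, madd (mneg a) a = mzero;
  mact_add : forall g a b, mact g (madd a b) = madd (mact g a) (mact g b);
  mact1 : forall a, mact (gone Gr) a = a;
  mactM : forall g h a, mact (gmul g h) a = mact g (mact h a) }.

Definition elem (Gr : group) (A : gmodule Gr) : tg :=
  @TG (gcar Gr)
    (fun g h => (mcar A * (g = h))%type)
    (fun g => (mzero A, erefl g))
    (fun x y z b a => (madd b.1 a.1, etrans a.2 b.2))
    (gmul (g:=Gr))
    (fun x x' y y' f g => (madd f.1 (mact x g.1), f_equal2 (gmul (g:=Gr)) f.2 g.2))
    (gone Gr)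
    (fun x y z => (mzero A, esym (gmulA x y z)))
    (fun x => (mzero A, gmul1l x))
    (fun x => (mzero A, gmul1r x)).

Definition split_2group (G : tg) : Prop :=
  exists (Gr : group) (A : gmodule Gr), equivalent G (elem A).

Definition wob (n : nat) (G : tg) := ({perm 'I_n} * ('I_n -> ob G))%type.

Definition rhd (T : Type) (n : nat) (x : 'I_n -> T) (s : {perm 'I_n}) : 'I_n -> T :=
  fun i => x (s i).

(* the paper's product  s s'  is composition  s o s'  (apply s' first);
   in mathcomp, (t * s) i = s (t i). *)
Definition pcomp (n : nat) (s t : {perm 'I_n}) : {perm 'I_n} := (t * s)%g.

Section Wreath.
Variables (n : nat) (G : tg).

Definition whom (X Y : wob n G) : Type :=
  ((X.1 = Y.1) * (forall i, hom (X.2 i) (Y.2 i)))%type.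

Definition widm (X : wob n G) : whom X X := (erefl X.1, fun i => idm (X.2 i)).

Definition wcomp (X Y Z : wob n G) (g : whom Y Z) (f : whom X Y) : whom X Z :=
  (etrans f.1 g.1, fun i => comp (g.2 i) (f.2 i)).

Definition wtens (X Y : wob n G) : wob n G :=
  (pcomp X.1 Y.1, fun i => tens (rhd X.2 Y.1 i) (Y.2 i)).

Definition wtensm (X X' Y Y' : wob n G) (f : whom X X') (g : whom Y Y')
  : whom (wtens X Y) (wtens X' Y') :=
  (f_equal2 (@pcomp n) f.1 g.1,
   fun i => tensm (comp (hom_of_eq (f_equal (fun s : {perm 'I_n} => X'.2 (s i)) g.1))
                        (f.2 (Y.1 i)))
                  (g.2 i)).

Definition wunit : wob n G := (1%g, fun _ => unit).

Definition wassoc (X Y Z : wob n G) : whom (wtens (wtens X Y) Z) (wtens X (wtens Y Z)) :=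
  (mulgA Z.1 Y.1 X.1,
   fun i => comp (assoc (X.2 (pcomp Y.1 Z.1 i)) (Y.2 (Z.1 i)) (Z.2 i))
                 (tensm (tensm (hom_of_eq (f_equal X.2 (esym (permM Z.1 Y.1 i))))
                               (idm (Y.2 (Z.1 i))))
                        (idm (Z.2 i)))).

Definition wlunit (X : wob n G) : whom (wtens wunit X) X :=
  (mulg1 X.1, fun i => lunit (X.2 i)).

Definition wrunit (X : wob n G) : whom (wtens X wunit) X :=
  (mul1g X.1,
   fun i => comp (runit (X.2 i))
                 (tensm (hom_of_eq (f_equal X.2 (perm1 i))) (idm unit))).

Definition wreath : tg :=
  @TG (wob n G) whom widm wcomp wtens wtensm wunit wassoc wlunit wrunit.
End Wreath.

(* Main.v *)
From HB Require Import structures.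
From Stdlib Require Import ProofIrrelevance FunctionalExtensionality.
From mathcomp Require Import all_boot all_algebra all_fingroup.
From mathcomp Require Import boolp.
From Pilot Require Import Defs.
Set Implicit Arguments. Unset Strict Implicit. Unset Printing Implicit Defensive.
Import GRing.Theory.
Local Open Scope ring_scope.

Inductive zexp := ZAt of nat | Z0 | ZAdd of zexp & zexp | ZOpp of zexp.

Section ZNorm.
Variable V : zmodType.
Fixpoint zeval (env : seq V) (e : zexp) : V :=
  match e with
  | ZAt i => nth 0 env i
  | Z0 => 0
  | ZAdd a b => zeval env a + zeval env b
  | ZOpp a => - zeval env a
  end.
Fixpoint addl (s t : seq int) : seq int :=
  match s, t with
  | [::], _ => t
  | _, [::] => s
  | a :: s', b :: t' => (a + b) :: addl s' t'
  end.
Fixpoint nf (e : zexp) : seq int :=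
  match e with
  | ZAt i => rcons (nseq i 0) 1
  | Z0 => [::]
  | ZAdd a b => addl (nf a) (nf b)
  | ZOpp a => map (fun c => - c) (nf a)
  end.
Fixpoint ev (env : seq V) (s : seq int) : V :=
  match s with
  | [::] => 0
  | c :: s' => (head 0 env) *~ c + ev (behead env) s'
  end.
Lemma ev_addl env s t : ev env (addl s t) = ev env s + ev env t.
Proof.
elim: s t env => [|a s IH] [|b t] env /=; rewrite ?add0r ?addr0 //.
by rewrite IH mulrzDr; rewrite addrACA.
Qed.
Lemma ev_opp env s : ev env (map (fun c => - c) s) = - ev env s.
Proof. elim: s env => [|a s IH] env /=; first by rewrite oppr0. by rewrite IH mulrNz opprD. Qed.
Lemma ev_atom env i : ev env (rcons (nseq i 0) 1) = nth 0 env i.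
Proof.
elim: i env => [|i IH] env /=; first by case: env => [|x env] /=; rewrite ?mulr0z ?addr0 ?mulr1z.
by rewrite mulr0z add0r IH; case: env => //= ; rewrite nth_nil.
Qed.
Lemma zeval_nf env e : zeval env e = ev env (nf e).
Proof.
elim: e => [i||a IHa b IHb|a IHa] /=; rewrite ?ev_atom ?ev_addl ?ev_opp ?IHa ?IHb //.
Qed.
Lemma ev_zero env s : all (fun c => c == 0) s -> ev env s = 0.
Proof. elim: s env => [|a s IH] env //= /andP [/eqP -> h]; by rewrite mulr0z add0r IH. Qed.
Lemma zsound env e1 e2 : all (fun c => c == 0) (nf (ZAdd e1 (ZOpp e2))) -> zeval env e1 = zeval env e2.
Proof.
move=> h; apply/eqP; rewrite -subr_eq0; apply/eqP.
have := ev_zero env h; by rewrite -zeval_nf.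
Qed.
End ZNorm.

Ltac zconv x t :=
  match goal with
  | _ => let _ := constr:(@erefl _ x : x = t) in constr:(true)
  | _ => constr:(false)
  end.
Ltac zmem t env :=
  lazymatch env with
  | cons ?x ?r => let b := zconv x t in
                  lazymatch b with true => constr:(true) | false => zmem t r end
  | _ => constr:(false)
  end.
Ltac zcollect V env t :=
  match t with
  | (?a + ?b)%R => let e1 := zcollect V env a in zcollect V e1 b
  | (- ?a)%R => zcollect V env a
  | 0%R => env
  | _ => let b := zmem t env in
         match b with true => env | false => constr:(@cons (GRing.Zmodule.sort V) t env) end
  end.
Ltac zindex t env :=
  lazymatch env with
  | cons ?x ?r => let b := zconv x t in
                  lazymatch b with true => constr:(0%N) | false => let k := zindex t r in constr:(S k) end
  end.
Ltac zreify env t :=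
  match t with
  | (?a + ?b)%R => let e1 := zreify env a in let e2 := zreify env b in constr:(ZAdd e1 e2)
  | (- ?a)%R => let e1 := zreify env a in constr:(ZOpp e1)
  | 0%R => constr:(Z0)
  | _ => let k := zindex t env in constr:(ZAt k)
  end.
Ltac zgroup V :=
  match goal with
  | |- ?l = ?r =>
    let env0 := zcollect V (@nil (GRing.Zmodule.sort V)) l in
    let env := zcollect V env0 r in
    let el := zreify env l in
    let er := zreify env r in
    change (@zeval V env el = @zeval V env er);
    apply: zsound; vm_compute; reflexivity
  end.

Definition cid2 {T : Type} {P : T -> Prop} (h : exists x, P x) : {x | P x} :=
  cid h.

HB.instance Definition _ (Gr : Defs.group) (A : gmodule Gr) := gen_eqMixin (mcar A).
HB.instance Definition _ (Gr : Defs.group) (A : gmodule Gr) := gen_choiceMixin (mcar A).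
HB.instance Definition _ (Gr : Defs.group) (A : gmodule Gr) :=
  GRing.isZmodule.Build (mcar A) (@maddA _ A) (@maddC _ A) (@madd0 _ A) (@maddN _ A).
Notation MZ A := (mcar A : zmodType).

Section ElemFacts.
Variables (Gr : Defs.group) (A : gmodule Gr).
Lemma maddE (a b : mcar A) : madd a b = (a : mcar A) + b. Proof. by []. Qed.
Lemma mzeroE : mzero A = (0 : mcar A). Proof. by []. Qed.
Lemma mnegE (a : mcar A) : mneg a = - (a : mcar A). Proof. by []. Qed.
Lemma mactD g (a b : mcar A) : mact g (a + b) = (mact g a : mcar A) + mact g b :> mcar A.
Proof. exact: mact_add. Qed.
Lemma mact0 g : mact g (0 : mcar A) = 0 :> mcar A.
Proof. have h := mactD g 0 0; rewrite addr0 in h.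
  have : (mact g (0:mcar A) : mcar A) + mact g (0:mcar A) = (mact g (0:mcar A) : mcar A) + 0 by rewrite addr0 -h.
  by move/addrI.
Qed.
Lemma mactN g (a : mcar A) : mact g (- a) = - (mact g a : mcar A) :> mcar A.
Proof. apply/eqP; rewrite -subr_eq0 opprK -mactD addNr mact0 //. Qed.
Lemma mactB g (a b : mcar A) : mact g (a - b) = (mact g a : mcar A) - (mact g b : mcar A) :> mcar A.
Proof. by rewrite mactD mactN. Qed.

Local Notation E := (elem A).
Lemma ehom_eq (g h : gcar Gr) (u v : @hom E g h) : u.1 = v.1 -> u = v.
Proof. case: u v => a p [b q] /= ->; by rewrite (proof_irrelevance _ p q). Qed.

Definition mkhom (g h : gcar Gr) (a : mcar A) (p : g = h) : @hom E g h := (a, p).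

End ElemFacts.

Lemma zsolve (V : zmodType) (p q s t : V) : p = q -> s - t = p - q -> s = t.
Proof. move=> -> ; rewrite subrr => /eqP; rewrite subr_eq0 => /eqP //. Qed.

Ltac zs V h := first [ apply: (@zsolve V _ _ _ _ h); zgroup V | apply: (@zsolve V _ _ _ _ (esym h)); zgroup V ].

Ltac msimpl := rewrite ?maddE ?mzeroE ?mnegE ?mactD ?mactN ?mact0 ?mactB.

Section EQ.
Variables (Gr : Defs.group) (A : gmodule Gr) (G : tg) (P : mfun G (elem A)).
Hypothesis HP : is_mfun P.
Hypothesis Hsurj : forall g, exists x, fob P x = g.
Hypothesis Hfull : forall x y, fob P x = fob P y -> forall a : mcar A, exists f : hom x y, (fhom P f).1 = a.
Hypothesis Hfaith : forall x y (f f' : hom x y), (fhom P f).1 = (fhom P f').1 -> f = f'.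

Local Notation E := (elem A).
Local Notation Pv f := ((fhom P f).1 : mcar A).

Lemma Pcomp (x y z : ob G) (f : hom x y) (g : hom y z) : Pv (comp g f) = Pv g + Pv f.
Proof. by rewrite (fhom_comp HP). Qed.
Lemma Pid (x : ob G) : Pv (idm x) = 0.
Proof. by rewrite (fhom_id HP). Qed.
Lemma Ptens (x x' y y' : ob G) (f : hom x x') (g : hom y y') :
  Pv (tensm f g) = ((fphi P x' y').1 : mcar A) + Pv f + (mact (fob P x) (Pv g) : mcar A) - ((fphi P x y).1 : mcar A).
Proof.
  have := f_equal fst (fphi_nat HP f g); rewrite /=; msimpl => h.
  zs (MZ A) h.
Qed.
Lemma Passoc (x y z : ob G) : Pv (assoc x y z) =
  ((fphi P x (tens y z)).1 : mcar A) + (mact (fob P x) (fphi P y z).1 : mcar A) - ((fphi P (tens x y) z).1 : mcar A) - ((fphi P x y).1 : mcar A).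
Proof.
  have := f_equal fst (fhexagon HP x y z); rewrite /=; msimpl => h.
  zs (MZ A) h.
Qed.
Lemma Plunit (x : ob G) : Pv (lunit x) = - ((fphi P Defs.unit x).1 : mcar A) - ((fphi0 P).1 : mcar A).
Proof.
  have := f_equal fst (funit_l HP x); rewrite /=; msimpl => h.
  zs (MZ A) h.
Qed.
Lemma Prunit (x : ob G) : Pv (runit x) = - ((fphi P x Defs.unit).1 : mcar A) - (mact (fob P x) (fphi0 P).1 : mcar A).
Proof.
  have := f_equal fst (funit_r HP x); rewrite /=; msimpl => h.
  zs (MZ A) h.
Qed.

Lemma Pfaith (x y : ob G) (f f' : hom x y) : Pv f = Pv f' -> f = f'.
Proof. exact: Hfaith. Qed.

Definition Kob (g : gcar Gr) : ob G := proj1_sig (cid2 (Hsurj g)).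
Lemma KobE g : fob P (Kob g) = g.
Proof. exact: proj2_sig (cid2 (Hsurj g)). Qed.

Lemma KmactE g (a : mcar A) : mact (fob P (Kob g)) a = mact g a.
Proof. by rewrite KobE. Qed.

Definition lift x y (e : fob P x = fob P y) (a : mcar A) : hom x y :=
  proj1_sig (cid2 (Hfull e a)).
Lemma liftE x y e a : Pv (@lift x y e a) = a.
Proof. exact: proj2_sig (cid2 (Hfull e a)). Qed.

Definition Khom (g h : gcar Gr) (u : @hom E g h) : hom (Kob g) (Kob h) :=
  @lift (Kob g) (Kob h) (etrans (KobE g) (etrans u.2 (esym (KobE h)))) u.1.

Definition Kphi (g h : gcar Gr) : hom (tens (Kob g) (Kob h)) (Kob (gmul g h)) :=
  @lift _ _ (etrans (esym (fphi P (Kob g) (Kob h)).2)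
                    (etrans (f_equal2 (@gmul Gr) (KobE g) (KobE h)) (esym (KobE (gmul g h)))))
        (- ((fphi P (Kob g) (Kob h)).1 : mcar A)).

Definition Kphi0 : hom Defs.unit (Kob (gone Gr)) :=
  @lift _ _ (etrans (esym (fphi0 P).2) (esym (KobE (gone Gr)))) (- ((fphi0 P).1 : mcar A)).

Definition K : mfun E G := @MFun E G Kob Khom Kphi Kphi0.

Lemma K_mfun : is_mfun K.
Proof.
split.
- move=> g; apply: Pfaith; rewrite /= /Khom liftE Pid //.
- move=> g h k u v; apply: Pfaith; rewrite /= Pcomp /Khom !liftE //.
- move=> g g' h h' u v; apply: Pfaith; rewrite /= !Pcomp /Kphi /Khom Ptens !liftE /= KmactE; msimpl.
  zgroup (MZ A).
- move=> g h k; apply: Pfaith; rewrite /= !Pcomp /Kphi /Khom !Ptens !liftE Passoc /= !Pid; msimpl.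
  zgroup (MZ A).
- move=> g; apply: Pfaith; rewrite /= !Pcomp /Kphi /Kphi0 /Khom !Ptens !liftE Plunit /= !Pid; msimpl.
  zgroup (MZ A).
- move=> g; apply: Pfaith; rewrite /= !Pcomp /Kphi /Kphi0 /Khom !Ptens !liftE Prunit /= !Pid; msimpl.
  zgroup (MZ A).
Qed.

Definition eta (x : ob G) : hom (fob (compF K P) x) (fob (idF G) x) :=
  @lift (Kob (fob P x)) x (KobE _) 0.
Definition eps (g : gcar Gr) : @hom E (fob (compF P K) g) (fob (idF E) g) :=
  (mzero A, KobE g).

Lemma eta_mnat : is_mnat (compF K P) (idF G) eta.
Proof.
split.
- move=> x y f; apply: Pfaith; rewrite /= !Pcomp /eta /Khom !liftE; msimpl; zgroup (MZ A).
- move=> x y; apply: Pfaith; rewrite /= !Pcomp /eta /Kphi /Khom Ptens !liftE /= Pid; msimpl; zgroup (MZ A).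
- apply: Pfaith; rewrite /= !Pcomp /eta /Kphi0 /Khom !liftE /= Pid; msimpl; zgroup (MZ A).
Qed.

Lemma eps_mnat : is_mnat (compF P K) (idF E) eps.
Proof.
split.
- move=> g h u; apply: ehom_eq; rewrite /= /Khom liftE; msimpl; zgroup (MZ A).
- move=> g h; apply: ehom_eq; rewrite /= /Kphi liftE; msimpl; zgroup (MZ A).
- apply: ehom_eq; rewrite /= /Kphi0 liftE; msimpl; zgroup (MZ A).
Qed.

Lemma EQ_equiv : equivalent G E.
Proof.
exists P, K; split=> //; [exact: K_mfun | by exists eta; exact: eta_mnat | by exists eps; exact: eps_mnat].
Qed.
End EQ.

Record cat_laws (H : tg) : Prop := {
  cl_assoc : forall (x y z w : ob H) (f : hom x y) (g : hom y z) (h : hom z w),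
      comp h (comp g f) = comp (comp h g) f;
  cl_idl : forall (x y : ob H) (f : hom x y), comp (idm y) f = f;
  cl_idr : forall (x y : ob H) (f : hom x y), comp f (idm x) = f;
  cl_inv : forall (x y : ob H) (f : hom x y),
      exists g : hom y x, comp g f = idm x /\ comp f g = idm y }.

Lemma twogroup_cat (G : tg) : is_twogroup G -> cat_laws G.
Proof. case=> *; by split. Qed.

Section D.
Variables (Gr : Defs.group) (A : gmodule Gr) (H : tg) (HL : cat_laws H).
Variables (F : mfun H (elem A)) (K : mfun (elem A) H).
Variables (eta : forall x, hom (fob (compF K F) x) (fob (idF H) x)).
Variables (eps : forall g, @hom (elem A) (fob (compF F K) g) (fob (idF (elem A)) g)).
Hypotheses (HF : is_mfun F) (HK : is_mfun K) (Heta : is_mnat _ _ eta) (Heps : is_mnat _ _ eps).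

Lemma FK_val (g g' : gcar Gr) (u : @hom (elem A) g g') : (fhom F (fhom K u)).1 = u.1.
Proof.
have := f_equal fst (mnat_nat Heps u); rewrite /=.
case: u => a p /=; subst g' => h.
apply: (@addrI _ ((eps g).1 : mcar A)).
rewrite [LHS]h; exact: addrC.
Qed.

Lemma K_faith (g g' : gcar Gr) (u v : @hom (elem A) g g') : fhom K u = fhom K v -> u = v.
Proof. move=> h; apply: ehom_eq; by rewrite -FK_val h FK_val. Qed.

Lemma D_surj g : exists x, fob F x = g.
Proof. exists (fob K g); exact: (eps g).2. Qed.

Lemma cancel_l (x y z : ob H) (e : hom y z) (f f' : hom x y) : comp e f = comp e f' -> f = f'.
Proof.
case: (cl_inv HL e) => i [hi _] h.
by rewrite -(cl_idl HL f) -(cl_idl HL f') -hi -!(cl_assoc HL) h.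
Qed.
Lemma cancel_r (x y z : ob H) (e : hom x y) (f f' : hom y z) : comp f e = comp f' e -> f = f'.
Proof.
case: (cl_inv HL e) => i [_ hi] h.
by rewrite -(cl_idr HL f) -(cl_idr HL f') -hi !(cl_assoc HL) h.
Qed.

Lemma D_faith (x y : ob H) (f f' : hom x y) : (fhom F f).1 = (fhom F f').1 -> f = f'.
Proof.
move=> h; have e : fhom F f = fhom F f' by apply: ehom_eq.
apply: (cancel_r (e := eta x)).
have := mnat_nat Heta f; have := mnat_nat Heta f'; rewrite /= e => -> //.
Qed.

Lemma D_full (x y : ob H) : fob F x = fob F y -> forall a : mcar A, exists f : hom x y, (fhom F f).1 = a.
Proof.
move=> exy a; pose u : @hom (elem A) (fob F x) (fob F y) := (a, exy).
case: (cl_inv HL (eta x)) => i [hi1 hi2].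
exists (comp (eta y) (comp (fhom K u) i)).
have e : fhom K (fhom F (comp (eta y) (comp (fhom K u) i))) = fhom K u.
  apply: (cancel_l (e := eta y)).
  have := mnat_nat Heta (comp (eta y) (comp (fhom K u) i)); rewrite /= => ->.
  by rewrite -!(cl_assoc HL) hi1 (cl_idr HL).
by rewrite -(FK_val (fhom F _)) e FK_val.
Qed.
End D.

Section WGroup.
Variables (n : nat) (Gr : Defs.group).
Local Notation C := ({perm 'I_n} * ('I_n -> gcar Gr))%type.
Definition wmul (X Y : C) : C := (pcomp X.1 Y.1, fun i => gmul (X.2 (Y.1 i)) (Y.2 i)).
Definition wone : C := (1%g, fun _ => gone Gr).
Definition winv (X : C) : C := (X.1^-1%g, fun i => ginv (X.2 (X.1^-1%g i))).

Lemma pcompE (s t : {perm 'I_n}) i : pcomp s t i = s (t i).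
Proof. by rewrite /pcomp permM. Qed.
Lemma pcompVE (s t : {perm 'I_n}) j : (pcomp s t)^-1%g j = t^-1%g (s^-1%g j).
Proof. by rewrite /pcomp invMg permM. Qed.

Lemma wmulA (X Y Z : C) : wmul X (wmul Y Z) = wmul (wmul X Y) Z.
Proof.
rewrite /wmul /=; congr (_, _); first by rewrite /pcomp mulgA.
apply: functional_extensionality => i; by rewrite ?pcompE /pcomp ?permM gmulA.
Qed.
Lemma wmul1l (X : C) : wmul wone X = X.
Proof.
case: X => s x; rewrite /wmul /=; congr (_, _); first by rewrite /pcomp mulg1.
apply: functional_extensionality => i; by rewrite gmul1l.
Qed.
Lemma wmul1r (X : C) : wmul X wone = X.
Proof.
case: X => s x; rewrite /wmul /=; congr (_, _); first by rewrite /pcomp mul1g.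
apply: functional_extensionality => i; by rewrite perm1 gmul1r.
Qed.
Lemma wmulVl (X : C) : wmul (winv X) X = wone.
Proof.
case: X => s x; rewrite /wmul /=; congr (_, _); first by rewrite /pcomp mulgV.
apply: functional_extensionality => i; by rewrite permK gmulVl.
Qed.
Lemma wmulVr (X : C) : wmul X (winv X) = wone.
Proof.
case: X => s x; rewrite /wmul /=; congr (_, _); first by rewrite /pcomp mulVg.
apply: functional_extensionality => i; by rewrite gmulVr.
Qed.

Definition WGr : Defs.group := Group wmulA wmul1l wmul1r wmulVl wmulVr.

Variable (A : gmodule Gr).
Local Notation M := ('I_n -> mcar A).
Definition wadd (a b : M) : M := fun i => madd (a i) (b i).
Definition wzero : M := fun _ => mzero A.
Definition wneg (a : M) : M := fun i => mneg (a i).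
Definition wact (X : C) (b : M) : M := fun j => mact (X.2 (X.1^-1%g j)) (b (X.1^-1%g j)).

Lemma waddA a b c : wadd a (wadd b c) = wadd (wadd a b) c.
Proof. apply: functional_extensionality => i; exact: maddA. Qed.
Lemma waddC a b : wadd a b = wadd b a.
Proof. apply: functional_extensionality => i; exact: maddC. Qed.
Lemma wadd0 a : wadd wzero a = a.
Proof. apply: functional_extensionality => i; exact: madd0. Qed.
Lemma waddN a : wadd (wneg a) a = wzero.
Proof. apply: functional_extensionality => i; exact: maddN. Qed.
Lemma wact_add g a b : wact g (wadd a b) = wadd (wact g a) (wact g b).
Proof. apply: functional_extensionality => i; exact: mact_add. Qed.
Lemma wact1 a : wact (gone WGr) a = a.
Proof. apply: functional_extensionality => i; by rewrite /wact /= invg1 perm1 mact1. Qed.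
Lemma wactM g h a : wact (gmul (g:=WGr) g h) a = wact g (wact h a).
Proof.
apply: functional_extensionality => j; rewrite /wact /= /pcomp invMg !permM permKV mactM //.
Qed.

Definition WA : gmodule WGr := @GModule WGr M wadd wzero wneg wact waddA waddC wadd0 waddN wact_add wact1 wactM.
End WGroup.

Section Transport.
Variables (G : tg).
Lemma hoe_tensl (HG : is_twogroup G) (a b y : ob G) (p : a = b) :
  tensm (hom_of_eq p) (idm y) = hom_of_eq (f_equal (fun z => tens z y) p).
Proof. case: b / p => /=; exact: (tensm_id HG). Qed.
Lemma hoe_tensr (HG : is_twogroup G) (a b y : ob G) (p : a = b) :
  tensm (idm y) (hom_of_eq p) = hom_of_eq (f_equal (fun z => tens y z) p).
Proof. case: b / p => /=; exact: (tensm_id HG). Qed.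
Lemma Fhoe (Gr : Defs.group) (A : gmodule Gr) (F : mfun G (elem A)) (HF : is_mfun F)
  (a b : ob G) (p : a = b) : (fhom F (hom_of_eq p)).1 = 0.
Proof. case: b / p => /=; by rewrite (fhom_id HF). Qed.
End Transport.

Section WF.
Variables (n : nat) (G : tg) (HG : is_twogroup G) (Gr : Defs.group) (A : gmodule Gr).
Variables (F : mfun G (elem A)) (HF : is_mfun F).
Local Notation W := (wreath n G).
Local Notation EW := (elem (WA n A)).

Definition WFob (X : wob n G) : gcar (WGr n Gr) := (X.1, fun i => fob F (X.2 i)).
Definition WFeq (X Y : wob n G) (f : whom X Y) : WFob X = WFob Y :=
  f_equal2 pair f.1 (functional_extensionality _ _ (fun i => (fhom F (f.2 i)).2)).
Definition WFhom (X Y : wob n G) (f : whom X Y) : @hom EW (WFob X) (WFob Y) :=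
  (fun j => (fhom F (f.2 (X.1^-1%g j))).1, WFeq f).
Definition WFphi (X Y : wob n G) : @hom EW (gmul (WFob X) (WFob Y)) (WFob (wtens X Y)) :=
  (fun j => (fphi F (X.2 (Y.1 ((pcomp X.1 Y.1)^-1%g j))) (Y.2 ((pcomp X.1 Y.1)^-1%g j))).1,
   f_equal (pair (pcomp X.1 Y.1))
     (functional_extensionality _ _ (fun i => (fphi F (X.2 (Y.1 i)) (Y.2 i)).2))).
Definition WFphi0 : @hom EW (gone (WGr n Gr)) (WFob (wunit n G)) :=
  (fun _ => (fphi0 F).1,
   f_equal (pair 1%g) (functional_extensionality _ _ (fun _ => (fphi0 F).2))).

Definition WF : mfun W EW := @MFun W EW WFob WFhom WFphi WFphi0.

Ltac ext := apply: (@ehom_eq _ (WA n A)); apply: functional_extensionality => j /=.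

Lemma WF_mfun : is_mfun WF.
Proof.
split.
- move=> X; ext; by rewrite (fhom_id HF).
- case=> s x [t y] [u z] [/= p f] [/= q g]; subst; ext.
  by rewrite /wadd (fhom_comp HF).
- case=> s x [s' x'] [t y] [t' y'] [/= p f] [/= q g]; subst; ext.
  rewrite /wadd /wact /rhd /=.
  rewrite Ptens // Pcomp //= Pid //.
  rewrite pcompVE permKV.
  msimpl. zgroup (MZ A).
- case=> s x [t y] [u z]; ext.
  rewrite /wadd /wact /wzero /rhd /=.
  rewrite Pcomp // !hoe_tensl // Fhoe // Passoc //.
  rewrite !pcompVE !pcompE !permKV.
  msimpl; zgroup (MZ A).
- case=> s x; ext.
  rewrite /wadd /wact /wzero /rhd /=.
  rewrite Plunit //.
  msimpl; zgroup (MZ A).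
- case=> s x; ext.
  rewrite /wadd /wact /wzero /rhd /=.
  rewrite Pcomp // hoe_tensl // Fhoe // Prunit // !pcompVE invg1 !perm1.
  msimpl; zgroup (MZ A).
Qed.
End WF.

Section WFprops.
Variables (n : nat) (G : tg) (HG : is_twogroup G) (Gr : Defs.group) (A : gmodule Gr).
Variables (F : mfun G (elem A)) (HF : is_mfun F).
Hypothesis Hsurj : forall g, exists x, fob F x = g.
Hypothesis Hfull : forall x y, fob F x = fob F y -> forall a : mcar A, exists f : hom x y, (fhom F f).1 = a.
Hypothesis Hfaith : forall x y (f f' : hom x y), (fhom F f).1 = (fhom F f').1 -> f = f'.

Lemma WF_surj (g : gcar (WGr n Gr)) : exists X, fob (WF n F) X = g.
Proof.
case: g => s h.
exists (s, fun i => proj1_sig (cid2 (Hsurj (h i)))).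
rewrite /= /WFob /=; congr (_, _); apply: functional_extensionality => i.
exact: proj2_sig (cid2 (Hsurj (h i))).
Qed.

Lemma WF_full (X Y : wob n G) : fob (WF n F) X = fob (WF n F) Y ->
  forall a : mcar (WA n A), exists f : whom X Y, (fhom (WF n F) f).1 = a.
Proof.
case: X Y => s x [t y] /= e a.
have e1 : s = t := f_equal fst e.
have e2 : forall i, fob F (x i) = fob F (y i) := fun i => f_equal (fun p => p.2 i) e.
exists (e1, fun i => proj1_sig (cid2 (Hfull (e2 i) (a (s i))))).
apply: functional_extensionality => j /=.
rewrite (proj2_sig (cid2 (Hfull (e2 _) (a (s _))))) permKV //.
Qed.

Lemma WF_faith (X Y : wob n G) (f f' : whom X Y) :
  (fhom (WF n F) f).1 = (fhom (WF n F) f').1 -> f = f'.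
Proof.
case: X Y f f' => s x [t y] [/= p f] [/= p' f'] /= h.
have -> : p' = p := eq_irrelevance _ _.
congr (_, _); apply: functional_extensionality_dep => i.
apply: Hfaith.
have := f_equal (fun v => v (s i)) h; by rewrite /= permK.
Qed.
End WFprops.

Theorem split_wreath (n : nat) (G : tg) : is_twogroup G -> split_2group G -> split_2group (wreath n G).
Proof.
move=> HG [Gr [A [F [K [HF HK [eta Heta] [eps Heps]]]]]].
have HL := twogroup_cat HG.
exists (WGr n Gr), (WA n A).
apply: (@EQ_equiv _ _ _ (WF n F)).
- exact: WF_mfun.
- apply: WF_surj; exact: D_surj eps.
- apply: WF_full; exact: (D_full HL Heta Heps).
- apply: WF_faith; exact: (D_faith HL Heta).
Qed.

Section HoE.
Variables (G : tg) (HG : is_twogroup G).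
Lemma hoe_self (a : ob G) (p : a = a) : hom_of_eq p = idm a.
Proof. by rewrite (proof_irrelevance _ p erefl). Qed.
Lemma hoe_irr (a b : ob G) (p q : a = b) : hom_of_eq p = hom_of_eq q.
Proof. by rewrite (proof_irrelevance _ p q). Qed.
Lemma hoe_comp (a b c : ob G) (p : a = b) (q : b = c) :
  comp (hom_of_eq q) (hom_of_eq p) = hom_of_eq (etrans p q).
Proof. case: c / q => /=; exact: (comp_idl HG). Qed.
Lemma hoe_tens (a a' b b' : ob G) (p : a = a') (q : b = b') :
  tensm (hom_of_eq p) (hom_of_eq q) = hom_of_eq (f_equal2 tens p q).
Proof. case: a' / p; case: b' / q; rewrite !hoe_self; exact (tensm_id HG a b). Qed.
Lemma fam_transport (I : Type) (X Y : I -> ob G) (f : forall i, hom (X i) (Y i)) (i j : I) (e : i = j) :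
  f i = comp (hom_of_eq (f_equal Y (esym e))) (comp (f j) (hom_of_eq (f_equal X e))).
Proof. case: j / e => /=; by rewrite (comp_idl HG) (comp_idr HG). Qed.
Lemma hoe_idl (a b : ob G) (p : a = b) : comp (idm b) (hom_of_eq p) = hom_of_eq p.
Proof. exact: (comp_idl HG). Qed.

Lemma assoc_conj (a b c a' b' c' S T : ob G)
  (p : tens a (tens b c) = T) (q : S = tens (tens a b) c)
  (p' : tens a' (tens b' c') = T) (q' : S = tens (tens a' b') c') :
  a = a' -> b = b' -> c = c' ->
  comp (hom_of_eq p) (comp (assoc a b c) (hom_of_eq q)) =
  comp (hom_of_eq p') (comp (assoc a' b' c') (hom_of_eq q')).
Proof. move=> ea eb ec; case: a' / ea p' q'; case: b' / eb; case: c' / ec => p' q'; by rewrite (hoe_irr p p') (hoe_irr q q'). Qed.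
Lemma lunit_conj (a a' S T : ob G) (p : a = T) (q : S = tens unit a) (p' : a' = T) (q' : S = tens unit a') :
  a = a' -> comp (hom_of_eq p) (comp (lunit a) (hom_of_eq q)) = comp (hom_of_eq p') (comp (lunit a') (hom_of_eq q')).
Proof. move=> ea; case: a' / ea p' q' => p' q'; by rewrite (hoe_irr p p') (hoe_irr q q'). Qed.
Lemma runit_conj (a a' S T : ob G) (p : a = T) (q : S = tens a unit) (p' : a' = T) (q' : S = tens a' unit) :
  a = a' -> comp (hom_of_eq p) (comp (runit a) (hom_of_eq q)) = comp (hom_of_eq p') (comp (runit a') (hom_of_eq q')).
Proof. move=> ea; case: a' / ea p' q' => p' q'; by rewrite (hoe_irr p p') (hoe_irr q q'). Qed.
End HoE.

Section WLaws.
Variables (n : nat) (G : tg) (HG : is_twogroup G).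
Local Notation W := (wreath n G).

Lemma whom_eq (X Y : wob n G) (f g : whom X Y) : (forall i, f.2 i = g.2 i) -> f = g.
Proof.
case: f g => p f [q g] /= h.
have -> : q = p := eq_irrelevance _ _.
congr (_, _); exact: functional_extensionality_dep.
Qed.

Lemma W_laws : cat_laws W.
Proof.
split.
- move=> X Y Z T f g h; apply: whom_eq => i /=; exact: (comp_assoc HG).
- move=> X Y f; apply: whom_eq => i /=; exact: (comp_idl HG).
- move=> X Y f; apply: whom_eq => i /=; exact: (comp_idr HG).
- move=> X Y f.
  pose g i := proj1_sig (cid2 (groupoid HG (f.2 i))).
  exists (esym f.1, g); split; apply: whom_eq => i /=;
  by case: (proj2_sig (cid2 (groupoid HG (f.2 i)))).
Qed.

Lemma wcomp2 (X Y Z : wob n G) (f : whom X Y) (g : whom Y Z) i :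
  (@comp W _ _ _ g f).2 i = comp (g.2 i) (f.2 i).
Proof. by []. Qed.
Lemma wtensm2 (X X' Y Y' : wob n G) (f : whom X X') (g : whom Y Y') i :
  (@tensm W _ _ _ _ f g).2 i =
  tensm (comp (hom_of_eq (f_equal (fun s : {perm 'I_n} => X'.2 (s i)) g.1)) (f.2 (Y.1 i))) (g.2 i).
Proof. by []. Qed.

Lemma hoe_W (X Y : wob n G) (p : X = Y) i :
  (@hom_of_eq W X Y p).2 i = hom_of_eq (f_equal (fun Z : wob n G => Z.2 i) p).
Proof. by case: Y / p. Qed.
End WLaws.

Section Iota.
Variables (m : nat) (G : tg) (HG : is_twogroup G).
Local Notation n := m.+1.
Local Notation W := (wreath n G).

Definition sel (k : nat) (a b : ob G) : ob G := match k with 0 => a | _.+1 => b end.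
Definition Iob (x : ob G) : wob n G := (1%g, fun i : 'I_n => sel i x unit).
Definition Ihom2 (x y : ob G) (f : hom x y) : forall i : 'I_n, hom (sel i x unit) (sel i y unit) :=
  fun i => match nat_of_ord i as k return hom (sel k x unit) (sel k y unit) with
           | 0 => f | _.+1 => idm unit end.
Definition Ihom (x y : ob G) (f : hom x y) : whom (Iob x) (Iob y) := (erefl, Ihom2 f).

Lemma Ihom_comp (x y z : ob G) (f : hom x y) (g : hom y z) :
  Ihom (comp g f) = @comp W _ _ _ (Ihom g) (Ihom f).
Proof. apply: whom_eq => -[[|k] Hk] //=; by rewrite (comp_idl HG). Qed.
Lemma Ihom_id (x : ob G) : Ihom (idm x) = @idm W (Iob x).
Proof. by apply: whom_eq => -[[|k] Hk]. Qed.

Definition Epw (x y : 'I_n -> ob G) : wtens (1%g, x) (1%g, y) = (1%g, fun i => tens (x i) (y i)).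
Proof.
rewrite /wtens /=; congr (_, _); first by rewrite /pcomp mulg1.
apply: functional_extensionality => i; by rewrite /rhd perm1.
Qed.

Lemma W_tens1 (x x' y y' : 'I_n -> ob G) (f : forall i, hom (x i) (x' i)) (g : forall i, hom (y i) (y' i)) :
  @comp W _ _ _ (@hom_of_eq W _ _ (Epw x' y')) (@wtensm n G (1%g, x) (1%g, x') (1%g, y) (1%g, y') (erefl, f) (erefl, g))
  = @comp W _ _ _ ((erefl, fun i => tensm (f i) (g i)) : whom (1%g, fun i => tens (x i) (y i)) (1%g, fun i => tens (x' i) (y' i)))
      (@hom_of_eq W _ _ (Epw x y)).
Proof.
apply: whom_eq => i; rewrite !wcomp2 wtensm2 !hoe_W hoe_self /= (comp_idl HG).
move: (f_equal _ (Epw x' y')) (f_equal _ (Epw x y)) => /= p1 p2.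
rewrite /rhd in p1 p2 *; have ej := perm1 i; move: p1 p2 ej; move: ((1%g : {perm 'I_n}) i) => j p1 p2 ej; subst j.
by rewrite !hoe_self (comp_idl HG) (comp_idr HG).
Qed.

Definition Ipt (x y : ob G) : wob n G := (1%g, fun i : 'I_n => tens (sel i x unit) (sel i y unit)).
Definition Iclean2 (x y : ob G) : forall i : 'I_n, hom (tens (sel i x unit) (sel i y unit)) (sel i (tens x y) unit) :=
  fun i => match nat_of_ord i as k return hom (tens (sel k x unit) (sel k y unit)) (sel k (tens x y) unit) with
           | 0 => idm (tens x y) | _.+1 => lunit unit end.
Definition Iclean (x y : ob G) : whom (Ipt x y) (Iob (tens x y)) := (erefl, Iclean2 x y).
Definition Iphi (x y : ob G) : whom (wtens (Iob x) (Iob y)) (Iob (tens x y)) :=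
  @comp W _ _ _ (Iclean x y) (@hom_of_eq W _ _ (Epw (Iob x).2 (Iob y).2)).

Lemma Iphi_nat (x x' y y' : ob G) (f : hom x x') (g : hom y y') :
  @comp W _ _ _ (Iphi x' y') (wtensm (Ihom f) (Ihom g)) = @comp W _ _ _ (Ihom (tensm f g)) (Iphi x y).
Proof.
rewrite /Iphi -(cl_assoc (W_laws n HG)) /Ihom W_tens1 !(cl_assoc (W_laws n HG)).
congr (comp _ _); apply: whom_eq => -[[|k] Hk] /=.
- by rewrite (comp_idl HG) (comp_idr HG).
- by rewrite (tensm_id HG) (comp_idl HG) (comp_idr HG).
Qed.

Lemma IphiE0 (x y : ob G) :
  (Iphi x y).2 ord0 = hom_of_eq (f_equal (fun Z : wob n G => Z.2 ord0) (Epw (Iob x).2 (Iob y).2)).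
Proof. by rewrite /Iphi wcomp2 hoe_W /= (comp_idl HG). Qed.
End Iota.

Definition inh_pick {T : Type} (h : inhabited T) : T :=
  proj1_sig (cid2 (let: inhabits t := h in ex_intro (fun _ : T => True) t I)).

Section IotaF.
Variables (m : nat) (G : tg) (HG : is_twogroup G) (Gr : Defs.group) (B : gmodule Gr).
Local Notation n := m.+1.
Local Notation W := (wreath n G).
Variables (F : mfun W (elem B)) (K : mfun (elem B) W).
Variables (eta : forall x, hom (fob (compF K F) x) (fob (idF W) x)).
Variables (eps : forall g, @hom (elem B) (fob (compF F K) g) (fob (idF (elem B)) g)).
Hypotheses (HF : is_mfun F) (HK : is_mfun K) (Heta : is_mnat _ _ eta) (Heps : is_mnat _ _ eps).

Local Notation WL := (W_laws n HG).
Definition Fv (X Y : wob n G) (h : whom X Y) : mcar B := (@fhom W (elem B) F X Y h).1.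

Lemma Fv_comp (X Y Z : wob n G) (f : whom X Y) (g : whom Y Z) :
  Fv (@comp W _ _ _ g f) = Fv g + Fv f.
Proof. by rewrite /Fv (fhom_comp HF). Qed.
Lemma Fv_id (X : wob n G) : Fv (@idm W X) = 0.
Proof. by rewrite /Fv (fhom_id HF). Qed.
Lemma Fv_tens (X X' Y Y' : wob n G) (f : whom X X') (g : whom Y Y') :
  Fv (@tensm W _ _ _ _ f g) = ((fphi F X' Y').1 : mcar B) + Fv f + (mact (fob F X) (Fv g) : mcar B) - ((fphi F X Y).1 : mcar B).
Proof. exact: (Ptens HF f g). Qed.
Lemma Fv_hoe (X Y : wob n G) (p : X = Y) : Fv (@hom_of_eq W X Y p) = 0.
Proof. exact: (Fhoe HF p). Qed.

Lemma Wfull (X Y : wob n G) : fob F X = fob F Y -> forall a : mcar B, exists f : whom X Y, Fv f = a.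
Proof. exact: (D_full WL Heta Heps). Qed.
Lemma Wfaith (X Y : wob n G) (f f' : whom X Y) : Fv f = Fv f' -> f = f'.
Proof. exact: (D_faith WL Heta). Qed.

Lemma Fv_Itens (x x' y y' : ob G) (f : hom x x') (g : hom y y') :
  Fv (Ihom m (tensm f g)) = Fv (Iphi m x' y') + Fv (@tensm W _ _ _ _ (Ihom m f) (Ihom m g)) - Fv (Iphi m x y).
Proof.
have := f_equal (@Fv _ _) (Iphi_nat m HG f g); rewrite !Fv_comp => h.
zs (MZ B) h.
Qed.
Lemma Fv_Itensl (a w : ob G) (u : hom a a) : Fv (Ihom m (tensm u (idm w))) = Fv (Ihom m u).
Proof.
rewrite Fv_Itens Fv_tens Ihom_id Fv_id; msimpl; zgroup (MZ B).
Qed.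
Lemma Fv_Itensr (a w : ob G) (u : hom a a) :
  Fv (Ihom m (tensm (idm w) u)) = mact (fob F (Iob m w)) (Fv (Ihom m u)).
Proof.
rewrite Fv_Itens Fv_tens Ihom_id Fv_id; msimpl; zgroup (MZ B).
Qed.
Lemma Fv_Icomp (x y z : ob G) (f : hom x y) (g : hom y z) :
  Fv (Ihom m (comp g f)) = Fv (Ihom m g) + Fv (Ihom m f).
Proof. by rewrite (Ihom_comp m HG) Fv_comp. Qed.
Lemma Fv_Iid (x : ob G) : Fv (Ihom m (idm x)) = 0.
Proof. by rewrite Ihom_id Fv_id. Qed.

Definition Lb (b : mcar B) : whom (wunit n G) (wunit n G) :=
  proj1_sig (cid2 (Wfull (erefl (fob F (wunit n G))) b)).
Lemma Lb_spec b : Fv (Lb b) = b.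
Proof. exact: proj2_sig (cid2 (Wfull (erefl (fob F (wunit n G))) b)). Qed.
Definition pi0 (b : mcar B) : mcar B := Fv (Ihom m ((Lb b).2 ord0)).

Definition winv_ob (x : ob G) : ob G := proj1_sig (cid2 (weak_inverse HG x)).
Definition winv_hom (x : ob G) : hom (tens x (winv_ob x)) unit :=
  inh_pick (proj1 (proj2_sig (cid2 (weak_inverse HG x)))).

Lemma transfer (X : wob n G) (hX : X.1 = 1%g) (h : whom X X) : pi0 (Fv h) = Fv (Ihom m (h.2 ord0)).
Proof.
pose yv i := winv_ob (X.2 i).
pose Z : wob n G := (1%g, yv).
have C1 : (wtens X Z).1 = (wunit n G).1 by rewrite /= /pcomp mul1g hX.
pose C : whom (wtens X Z) (wunit n G) :=
  (C1, fun i => comp (winv_hom (X.2 i)) (hom_of_eq (f_equal (fun k => tens (X.2 k) (yv i)) (perm1 i)))).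
case: (cl_inv WL C) => D [hDC hCD].
pose h' := @comp W _ _ _ C (@comp W _ _ _ (@tensm W _ _ _ _ h (@idm W Z)) D).
have e0 : Fv D + Fv C = 0 by rewrite -Fv_comp hDC Fv_id.
have e1 : Fv h' = Fv h.
  rewrite /h' !Fv_comp Fv_tens Fv_id; msimpl.
  apply: (@zsolve (MZ B) _ _ _ _ e0); zgroup (MZ B).
have e2 : Lb (Fv h) = h' by apply: Wfaith; rewrite Lb_spec e1.
rewrite /pi0 e2 /h' !wcomp2 !Fv_Icomp.
have hD0 : comp (D.2 ord0) (C.2 ord0) = idm _ := f_equal (fun k => k.2 ord0) hDC.
have e3 : Fv (Ihom m (D.2 ord0)) + Fv (Ihom m (C.2 ord0)) = 0 by rewrite -Fv_Icomp hD0 Fv_Iid.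
simpl in e3; rewrite Fv_Icomp in e3.
rewrite wtensm2 (hoe_self (f_equal _ (@idm W Z).1)) (comp_idl HG) /= Fv_Itensl.
have -> : Fv (Ihom m (h.2 ((1%g : {perm 'I_n}) ord0))) = Fv (Ihom m (h.2 ord0)) by rewrite perm1.
apply: (@zsolve (MZ B) _ _ _ _ e3); zgroup (MZ B).
Qed.

Lemma pi0_add (a b : mcar B) : pi0 (a + b) = pi0 a + pi0 b.
Proof.
have e : Lb (a + b) = @comp W _ _ _ (Lb a) (Lb b) by apply: Wfaith; rewrite Fv_comp !Lb_spec.
by rewrite /pi0 e wcomp2 Fv_Icomp.
Qed.
Lemma pi0_0 : pi0 0 = 0.
Proof.
have h := pi0_add 0 0; rewrite addr0 in h.
have : pi0 0 + pi0 0 = pi0 0 + 0 by rewrite addr0 -h.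
by move/addrI.
Qed.
Lemma pi0_opp (a : mcar B) : pi0 (- a) = - pi0 a.
Proof. apply/eqP; rewrite -addr_eq0 -pi0_add addNr pi0_0 //. Qed.
Lemma pi0_sub (a b : mcar B) : pi0 (a - b) = pi0 a - pi0 b.
Proof. by rewrite pi0_add pi0_opp. Qed.

Lemma pi0_I (x : ob G) (k : hom x x) : pi0 (Fv (Ihom m k)) = Fv (Ihom m k).
Proof. exact: (transfer (X := Iob m x) erefl (Ihom m k)). Qed.
Lemma pi0_idem (b : mcar B) : pi0 (pi0 b) = pi0 b.
Proof. exact: pi0_I. Qed.

Lemma pi0_mact (x : ob G) (b : mcar B) :
  pi0 (mact (fob F (Iob m x)) b) = mact (fob F (Iob m x)) (pi0 b).
Proof.
pose h := @tensm W _ _ _ _ (@idm W (Iob m x)) (Lb b).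
have hX : (wtens (Iob m x) (wunit n G)).1 = 1%g by rewrite /= /pcomp mulg1.
have e : Fv h = mact (fob F (Iob m x)) b.
  rewrite /h Fv_tens Fv_id Lb_spec; msimpl; zgroup (MZ B).
rewrite -e (transfer hX h) /h wtensm2 (hoe_self (f_equal _ (Lb b).1)) (comp_idl HG) Fv_Itensr.
congr (mact _ _); by rewrite /rhd /= perm1.
Qed.

Lemma pi0_surjI (a : mcar B) (x : ob G) : pi0 a = a -> exists k : hom x x, Fv (Ihom m k) = a.
Proof.
move=> ha.
case: (groupoid HG (lunit x)) => li [h1 h2].
exists (comp (lunit x) (comp (tensm ((Lb a).2 ord0) (idm x)) li)).
rewrite !Fv_Icomp Fv_Itensl.
have e : Fv (Ihom m li) + Fv (Ihom m (lunit x)) = 0 by rewrite -Fv_Icomp h1 Fv_Iid.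
rewrite -[RHS]ha /pi0; apply: (@zsolve (MZ B) _ _ _ _ e); zgroup (MZ B).
Qed.
End IotaF.

Section Coh.
Variables (m : nat) (G : tg) (HG : is_twogroup G).
Local Notation n := m.+1.
Local Notation W := (wreath n G).
Local Notation I := (Ihom m).
Local Notation IO := (Iob m).
Local Notation IP := (Iphi m).
Arguments Iphi : simpl never.

Lemma assoc_conj_l (a b c a' b' c' S : ob G)
  (q : S = tens (tens a b) c)
  (p' : tens a' (tens b' c') = tens a (tens b c)) (q' : S = tens (tens a' b') c') :
  a = a' -> b = b' -> c = c' ->
  comp (assoc a b c) (hom_of_eq q) =
  comp (hom_of_eq p') (comp (assoc a' b' c') (hom_of_eq q')).
Proof.
move=> ea eb ec; rewrite -(assoc_conj (erefl _) q p' q' ea eb ec).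
by rewrite (comp_idl HG).
Qed.

Lemma wassoc2 (X Y Z : wob n G) i : (@assoc W X Y Z).2 i =
  comp (assoc (X.2 (pcomp Y.1 Z.1 i)) (Y.2 (Z.1 i)) (Z.2 i))
       (tensm (tensm (hom_of_eq (f_equal X.2 (esym (permM Z.1 Y.1 i)))) (idm (Y.2 (Z.1 i)))) (idm (Z.2 i))).
Proof. by []. Qed.
Lemma Iclean0 (x y : ob G) : (Iclean m x y).2 ord0 = idm (tens x y).
Proof. by []. Qed.
Lemma Iclean2_0 (x y : ob G) : @Iclean2 m G x y ord0 = idm (tens x y).
Proof. by []. Qed.
Lemma widm2 (X : wob n G) i : (@idm W X).2 i = idm (X.2 i).
Proof. by []. Qed.
Lemma Ihom0 (x y : ob G) (f : hom x y) : (I f).2 ord0 = f.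
Proof. by []. Qed.

Definition HexL x y z : whom (wtens (wtens (IO x) (IO y)) (IO z)) (IO (tens x (tens y z))) :=
  @comp W _ _ _ (I (assoc x y z)) (@comp W _ _ _ (IP (tens x y) z) (@tensm W _ _ _ _ (IP x y) (@idm W (IO z)))).
Definition HexR x y z : whom (wtens (wtens (IO x) (IO y)) (IO z)) (IO (tens x (tens y z))) :=
  @comp W _ _ _ (IP x (tens y z)) (@comp W _ _ _ (@tensm W _ _ _ _ (@idm W (IO x)) (IP y z)) (@assoc W (IO x) (IO y) (IO z))).

Lemma hex0 x y z : (HexL x y z).2 ord0 = (HexR x y z).2 ord0.
Proof.
rewrite /HexL /HexR !wcomp2 !wtensm2 wassoc2 Ihom0 ?(IphiE0 m HG).
rewrite (hoe_self (f_equal _ (@idm W (IO z)).1)) (comp_idl HG).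
rewrite !Iclean0 !hoe_W !(comp_idl HG) !widm2 (comp_idr HG).
have e0 : (IO z).1 ord0 = ord0 by rewrite /= perm1.
rewrite (fam_transport HG (IP x y).2 e0).
rewrite ?(IphiE0 m HG) ?Iclean2_0 ?Iclean0 ?hoe_W ?(comp_idl HG) !hoe_comp // !hoe_tensl // !hoe_tens // !(comp_assoc HG) !hoe_comp //.
rewrite -!(comp_assoc HG) hoe_comp //.
apply: assoc_conj_l => //=; by rewrite /rhd ?pcompE ?perm1.
Qed.

Lemma WU : wunit n G = IO unit.
Proof.
rewrite /wunit /Iob; congr (_, _); apply: functional_extensionality => -[[|k] Hk] //.
Qed.

Definition LunL x : whom (wtens (wunit n G) (IO x)) (IO x) :=
  @comp W _ _ _ (I (lunit x)) (@comp W _ _ _ (IP unit x) (@tensm W _ _ _ _ (@hom_of_eq W _ _ WU) (@idm W (IO x)))).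
Definition RunL x : whom (wtens (IO x) (wunit n G)) (IO x) :=
  @comp W _ _ _ (I (runit x)) (@comp W _ _ _ (IP x unit) (@tensm W _ _ _ _ (@idm W (IO x)) (@hom_of_eq W _ _ WU))).

Lemma lun0 x : (LunL x).2 ord0 = (@lunit W (IO x)).2 ord0.
Proof.
rewrite /LunL !wcomp2 !wtensm2 Ihom0 ?(IphiE0 m HG).
rewrite (hoe_self (f_equal _ (@idm W (IO x)).1)) (comp_idl HG).
rewrite ?Iclean2_0 ?Iclean0 ?hoe_W ?(comp_idl HG) ?widm2 !hoe_tensl // !hoe_comp //.
by rewrite hoe_self (comp_idr HG).
Qed.

Lemma run0 x : (RunL x).2 ord0 = (@runit W (IO x)).2 ord0.
Proof.
rewrite /RunL !wcomp2 !wtensm2 Ihom0 ?(IphiE0 m HG).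
rewrite ?Iclean2_0 ?Iclean0 ?hoe_W ?(comp_idl HG) ?widm2 ?(comp_idr HG).
rewrite !hoe_tens // !hoe_comp //=.
rewrite !hoe_tensl //; congr (comp _ _); exact: hoe_irr.
Qed.
End Coh.

Lemma sig_eqP {T : Type} {P : T -> Prop} (u v : {x | P x}) : proj1_sig u = proj1_sig v -> u = v.
Proof. case: u v => a pa [b pb] /= e; subst b; by rewrite (proof_irrelevance _ pa pb). Qed.

Section Back.
Variables (m : nat) (G : tg) (HG : is_twogroup G) (Gr : Defs.group) (B : gmodule Gr).
Local Notation n := m.+1.
Local Notation W := (wreath n G).
Variables (F : mfun W (elem B)) (K : mfun (elem B) W).
Variables (eta : forall x, hom (fob (compF K F) x) (fob (idF W) x)).
Variables (eps : forall g, @hom (elem B) (fob (compF F K) g) (fob (idF (elem B)) g)).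
Hypotheses (HF : is_mfun F) (HK : is_mfun K) (Heta : is_mnat _ _ eta) (Heps : is_mnat _ _ eps).
Local Notation I := (Ihom m).
Local Notation IO := (Iob m).
Local Notation IP := (Iphi m).
Local Notation Fv := (Fv F).
Local Notation pi0 := (pi0 HG Heta Heps).
Local Notation WL := (W_laws n HG).
Local Notation Fv_comp := (Fv_comp HF).
Local Notation Fv_id := (Fv_id HF).
Local Notation Fv_tens := (Fv_tens HF).
Local Notation Fv_hoe := (Fv_hoe HF).
Local Notation Fv_Iid := (Fv_Iid HF).
Local Notation Fv_Icomp := (Fv_Icomp HG HF).
Local Notation Fv_Itens := (Fv_Itens HG HF).
Local Notation pi0_add := (pi0_add HG HF Heta Heps).
Local Notation pi0_0 := (pi0_0 HG HF Heta Heps).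
Local Notation pi0_opp := (pi0_opp HG HF Heta Heps).
Local Notation pi0_sub := (pi0_sub HG HF Heta Heps).
Local Notation pi0_idem := (pi0_idem HG HF Heta Heps).
Local Notation pi0_mact := (pi0_mact HG HF Heta Heps).
Local Notation pi0_I := (pi0_I HG HF Heta Heps).
Local Notation transfer := (transfer HG HF Heta Heps).

Lemma coord0_pi0 (X Y : wob n G) (hX : X.1 = 1%g) (f g : whom X Y) :
  f.2 ord0 = g.2 ord0 -> pi0 (Fv f) = pi0 (Fv g).
Proof.
move=> e.
case: (cl_inv WL g) => gi [h1 h2].
have e1 : Fv gi + Fv g = 0 by rewrite -Fv_comp h1 Fv_id.
have e2 : pi0 (Fv (@comp W _ _ _ gi f)) = 0.
  rewrite (transfer hX) wcomp2 e.
  have -> : comp (gi.2 ord0) (g.2 ord0) = (@comp W _ _ _ gi g).2 ord0 by [].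
  by rewrite h1 widm2 Fv_Iid.
rewrite Fv_comp pi0_add in e2.
have e3 : pi0 (Fv gi) + pi0 (Fv g) = 0 by rewrite -pi0_add e1 pi0_0.
apply: (@zsolve (MZ B) _ _ _ _ (etrans e2 (esym e3))); zgroup (MZ B).
Qed.

Lemma Fob_hom (X Y : wob n G) (f : whom X Y) : fob F X = fob F Y.
Proof. exact: (fhom F f).2. Qed.
Lemma IOmul x y : gmul (fob F (IO x)) (fob F (IO y)) = fob F (IO (tens x y)).
Proof. exact: etrans (fphi F (IO x) (IO y)).2 (Fob_hom (IP x y)). Qed.
Lemma IOone : gone Gr = fob F (IO unit).
Proof. exact: etrans (fphi0 F).2 (f_equal (fob F) (WU m G)). Qed.
Lemma IOinv x : fob F (IO (winv_ob HG x)) = ginv (fob F (IO x)).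
Proof.
have h : gmul (fob F (IO x)) (fob F (IO (winv_ob HG x))) = gone Gr.
  by rewrite IOmul (Fob_hom (I (winv_hom HG x))) IOone.
by rewrite -[LHS]gmul1l -(gmulVl (fob F (IO x))) -gmulA h gmul1r.
Qed.

Definition Gc := {g : gcar Gr | exists x, fob F (IO x) = g}.
Lemma Gmul_cl a b : (exists x, fob F (IO x) = a) -> (exists y, fob F (IO y) = b) ->
  exists z, fob F (IO z) = gmul a b.
Proof. case=> x <- [y <-]; exists (tens x y); by rewrite IOmul. Qed.
Lemma Ginv_cl a : (exists x, fob F (IO x) = a) -> exists z, fob F (IO z) = ginv a.
Proof. case=> x <-; exists (winv_ob HG x); exact: IOinv. Qed.
Definition Gmul (u v : Gc) : Gc := exist _ (gmul (proj1_sig u) (proj1_sig v)) (Gmul_cl (proj2_sig u) (proj2_sig v)).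
Definition Gone : Gc := exist _ (gone Gr) (ex_intro _ unit (esym IOone)).
Definition Ginv (u : Gc) : Gc := exist _ (ginv (proj1_sig u)) (Ginv_cl (proj2_sig u)).
Lemma GmulA a b c : Gmul a (Gmul b c) = Gmul (Gmul a b) c.
Proof. apply: sig_eqP; exact: gmulA. Qed.
Lemma Gmul1l a : Gmul Gone a = a.
Proof. apply: sig_eqP; exact: gmul1l. Qed.
Lemma Gmul1r a : Gmul a Gone = a.
Proof. apply: sig_eqP; exact: gmul1r. Qed.
Lemma GmulVl a : Gmul (Ginv a) a = Gone.
Proof. apply: sig_eqP; exact: gmulVl. Qed.
Lemma GmulVr a : Gmul a (Ginv a) = Gone.
Proof. apply: sig_eqP; exact: gmulVr. Qed.
Definition Gam : Defs.group := @Group Gc Gmul Gone Ginv GmulA Gmul1l Gmul1r GmulVl GmulVr.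

Definition Ac := {b : mcar B | pi0 b = b}.
Lemma Aadd_cl (a b : mcar B) : pi0 a = a -> pi0 b = b -> pi0 (a + b) = a + b.
Proof. by move=> ha hb; rewrite pi0_add ha hb. Qed.
Lemma Aneg_cl (a : mcar B) : pi0 a = a -> pi0 (- a) = - a.
Proof. by move=> ha; rewrite pi0_opp ha. Qed.
Lemma Aact_cl (g : gcar Gr) (a : mcar B) : (exists x, fob F (IO x) = g) -> pi0 a = a ->
  pi0 (mact g a) = mact g a.
Proof. case=> x <- ha; by rewrite pi0_mact ha. Qed.
Definition Aadd (a b : Ac) : Ac := exist _ _ (Aadd_cl (proj2_sig a) (proj2_sig b)).
Definition Azero : Ac := exist _ 0 pi0_0.
Definition Aneg (a : Ac) : Ac := exist _ _ (Aneg_cl (proj2_sig a)).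
Definition Aact (g : Gc) (a : Ac) : Ac := exist _ _ (Aact_cl (proj2_sig g) (proj2_sig a)).
Lemma AaddA a b c : Aadd a (Aadd b c) = Aadd (Aadd a b) c.
Proof. apply: sig_eqP; exact: addrA. Qed.
Lemma AaddC a b : Aadd a b = Aadd b a.
Proof. apply: sig_eqP; exact: addrC. Qed.
Lemma Aadd0 a : Aadd Azero a = a.
Proof. apply: sig_eqP; exact: add0r. Qed.
Lemma AaddN a : Aadd (Aneg a) a = Azero.
Proof. apply: sig_eqP; exact: addNr. Qed.
Lemma Aact_add g a b : Aact g (Aadd a b) = Aadd (Aact g a) (Aact g b).
Proof. apply: sig_eqP; exact: mact_add. Qed.
Lemma Aact1 a : Aact (gone Gam) a = a.
Proof. apply: sig_eqP; exact: mact1. Qed.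
Lemma AactM g h a : Aact (gmul (g:=Gam) g h) a = Aact g (Aact h a).
Proof. apply: sig_eqP; exact: mactM. Qed.
Definition Am : gmodule Gam := @GModule Gam Ac Aadd Azero Aneg Aact AaddA AaddC Aadd0 AaddN Aact_add Aact1 AactM.

Definition Pob (x : ob G) : gcar Gam := exist _ (fob F (IO x)) (ex_intro _ x erefl).
Definition Pval (b : mcar B) : mcar Am := exist _ (pi0 b) (pi0_idem b).
Definition Phom (x y : ob G) (f : hom x y) : @hom (elem Am) (Pob x) (Pob y) :=
  (Pval (Fv (I f)), @sig_eqP _ _ (Pob x) (Pob y) (Fob_hom (I f))).
Definition Pphi (x y : ob G) : @hom (elem Am) (gmul (Pob x) (Pob y)) (Pob (tens x y)) :=
  (Pval (Fv (IP x y) + (fphi F (IO x) (IO y)).1), @sig_eqP _ _ (gmul (Pob x) (Pob y)) (Pob (tens x y)) (IOmul x y)).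
Definition Pphi0 : @hom (elem Am) (gone Gam) (Pob unit) := (Pval (fphi0 F).1, @sig_eqP _ _ (gone Gam) (Pob unit) IOone).
Definition P : mfun G (elem Am) := @MFun G (elem Am) Pob Phom Pphi Pphi0.

Ltac pdist := rewrite ?(pi0_add, pi0_sub, pi0_opp, pi0_mact, pi0_0).

Lemma hexkey x y z : pi0 (Fv (HexL m x y z)) = pi0 (Fv (HexR m x y z)).
Proof. apply: coord0_pi0; [by rewrite /= /pcomp !mulg1 | exact: hex0]. Qed.
Lemma lunkey x : pi0 (Fv (LunL m x)) = pi0 (Fv (@lunit W (IO x))).
Proof. apply: coord0_pi0; [by rewrite /= /pcomp !mulg1 | exact: lun0]. Qed.
Lemma runkey x : pi0 (Fv (RunL m x)) = pi0 (Fv (@runit W (IO x))).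
Proof. apply: coord0_pi0; [by rewrite /= /pcomp !mulg1 | exact: run0]. Qed.

Lemma Fv_assoc (X Y Z : wob n G) : Fv (@assoc W X Y Z) =
  ((fphi F X (wtens Y Z)).1 : mcar B) + (mact (fob F X) (fphi F Y Z).1 : mcar B) - ((fphi F (wtens X Y) Z).1 : mcar B) - ((fphi F X Y).1 : mcar B).
Proof. exact: (Passoc HF X Y Z). Qed.
Lemma Fv_lunit (X : wob n G) : Fv (@lunit W X) = - ((fphi F (wunit n G) X).1 : mcar B) - ((fphi0 F).1 : mcar B).
Proof. exact: (Plunit HF X). Qed.
Lemma Fv_runit (X : wob n G) : Fv (@runit W X) = - ((fphi F X (wunit n G)).1 : mcar B) - (mact (fob F X) (fphi0 F).1 : mcar B).
Proof. exact: (Prunit HF X). Qed.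

Ltac pext := apply: (@ehom_eq _ Am); apply: sig_eqP => /=.

Lemma P_mfun : is_mfun P.
Proof.
split.
- move=> x; pext; by rewrite Ihom_id Fv_id pi0_0.
- move=> x y z f g; pext; by rewrite Fv_Icomp pi0_add.
- move=> x x' y y' f g; pext.
  rewrite Fv_Itens Fv_tens ?Fv_comp ?Fv_hoe; msimpl; pdist. zgroup (MZ B).
- move=> x y z; pext.
  have := hexkey x y z; rewrite /HexL /HexR !Fv_comp !Fv_tens Fv_assoc !Fv_id ?Fv_comp ?Fv_hoe; msimpl; pdist => h.
  rewrite ?Fv_comp ?Fv_hoe; msimpl; pdist; zs (MZ B) h.
- move=> x; pext.
  have := lunkey x; rewrite /LunL !Fv_comp !Fv_tens Fv_lunit ?Fv_id ?Fv_comp ?Fv_hoe; msimpl; pdist => h.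
  rewrite ?Fv_comp ?Fv_hoe; msimpl; pdist; zs (MZ B) h.
- move=> x; pext.
  have := runkey x; rewrite /RunL !Fv_comp !Fv_tens Fv_runit ?Fv_id ?Fv_comp ?Fv_hoe; msimpl; pdist => h.
  rewrite ?Fv_comp ?Fv_hoe; msimpl; pdist; zs (MZ B) h.
Qed.

Lemma P_surj (g : gcar Gam) : exists x, fob P x = g.
Proof. case: g => g [x hx]; exists x; exact: sig_eqP. Qed.

Lemma P_full (x y : ob G) : fob P x = fob P y -> forall a : mcar Am, exists f : hom x y, (fhom P f).1 = a.
Proof.
move=> exy [a ha].
have e : fob F (IO x) = fob F (IO y) := f_equal (@proj1_sig _ _) exy.
case: (Wfull HG Heta Heps e 0) => h _.
pose f0 : hom x y := h.2 ord0.
have hb : pi0 (a - pi0 (Fv (I f0))) = a - pi0 (Fv (I f0)) by rewrite pi0_sub pi0_idem ha.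
case: (pi0_surjI HF x hb) => k hk.
exists (comp f0 k); apply: sig_eqP => /=.
rewrite Fv_Icomp pi0_add pi0_I hk; zgroup (MZ B).
Qed.

Lemma P_faith (x y : ob G) (f f' : hom x y) : (fhom P f).1 = (fhom P f').1 -> f = f'.
Proof.
move=> /(f_equal (@proj1_sig _ _)) /= e.
case: (groupoid HG f') => g' [h1 h2].
have e1 : Fv (I g') + Fv (I f') = 0 by rewrite -Fv_Icomp h1 Fv_Iid.
have e2 : pi0 (Fv (I g')) + pi0 (Fv (I f')) = 0 by rewrite -pi0_add e1 pi0_0.
have e3 : Fv (I (comp g' f)) = Fv (I (idm x)).
  rewrite -pi0_I Fv_Icomp pi0_add Fv_Iid e.
  apply: (@zsolve (MZ B) _ _ _ _ e2); zgroup (MZ B).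
have e4 : comp g' f = idm x := f_equal (fun h => h.2 ord0) (Wfaith HG Heta e3).
by rewrite -(comp_idr HG f') -e4 (comp_assoc HG) h2 (comp_idl HG).
Qed.
End Back.

Theorem split_of_wreath (m : nat) (G : tg) : is_twogroup G -> split_2group (wreath m.+1 G) -> split_2group G.
Proof.
move=> HG [Gr [B [F [K [HF HK [eta Heta] [eps Heps]]]]]].
do 2 eexists.
apply: (@EQ_equiv _ _ _ (P HG HF Heta Heps)).
- exact: P_mfun.
- exact: P_surj.
- exact: P_full.
- exact: P_faith.
Qed.


Theorem proposition3p17 (G : tg) (n : nat) :
  is_twogroup G -> (1 <= n)%N -> (split_2group (wreath n G) <-> split_2group G).
Proof.
move=> HG; case: n => [//|m] _; split; [exact: split_of_wreath | exact: split_wreath].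
Qed.
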